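(* Let $k\ge1$ and integers $0\le w<w'\le k$. Let $\mathcal{V}_w^k$ (resp. $\mathcal{V}_{w'}^k$) be the set of vectors in $\{0,1\}^k$ with exactly $w$ (resp. $w'$) ones, and let $L^k_{w,w'}=\prod_{i=0}^{w'-w-1}\frac{w'-i}{k-w-i}$. Let $\tilde{G}$ be the bipartite graph whose left vertex class is $\mathcal{V}_w^k$ and whose right vertex class is the disjoint union of $\lceil L^k_{w,w'}\rceil$ copies $\mathcal{V}^k_{w',1},\ldots,\mathcal{V}^k_{w',\lceil L^k_{w,w'}\rceil}$ of $\mathcal{V}_{w'}^k$, where $v\in\mathcal{V}_w^k$ is adjacent to the copy of $v'\in\mathcal{V}_{w'}^k$ in $\mathcal{V}^k_{w',l}$ (for each $l$) if and only if the support of $v$ is a subset of the support of $v'$. Then $\tilde{G}$ has a perfect matching with respect to $\mathcal{V}_w^k$.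
   Context: A perfect matching with respect to $\mathcal{V}_w^k$ is a set of $|\mathcal{V}_w^k|$ edges, no two of which share a vertex. The support of a vector is the set of indices of its nonzero entries. *)

(* Defs.v *)
From mathcomp Require Import all_boot all_order all_algebra.
Set Implicit Arguments. Unset Strict Implicit. Unset Printing Implicit Defensive.
Import Order.TTheory GRing.Theory Num.Theory.

Definition bvec (k : nat) := {ffun 'I_k -> bool}.

Definition supp (k : nat) (v : bvec k) : {set 'I_k} := [set i | v i].

Definition Vw (k w : nat) : {set bvec k} := [set v : bvec k | #|supp v| == w].

Definition Lkww (k w w' : nat) : rat :=
  (\prod_(0 <= i < w' - w) ((w' - i)%:R / (k - w - i)%:R))%R.

Definition ncopies (k w w' : nat) : nat := `|Num.ceil (Lkww k w w')|%N.

(* Right vertices: pairs (v', l) = copy of v' in the l-th copy V_{w',l}. *)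
Definition right_vtx (k w w' : nat) := (bvec k * 'I_(ncopies k w w'))%type.

Definition Gedge (k w w' : nat) (e : bvec k * right_vtx k w w') : bool :=
  [&& e.1 \in Vw k w, e.2.1 \in Vw k w' & supp e.1 \subset supp e.2.1].

Definition perfect_matching_wrt_left (k w w' : nat)
    (M : {set bvec k * right_vtx k w w'}) : Prop :=
  [/\ {in M, forall e, Gedge e},
      #|M| = #|Vw k w| &
      {in M &, forall e1 e2, e1 != e2 -> e1.1 != e2.1 /\ e1.2 != e2.2}].

(* Main.v *)
Require Import Defs.
From mathcomp Require Import all_boot all_order all_algebra.
From mathcomp Require Import zify.
Set Implicit Arguments. Unset Strict Implicit. Unset Printing Implicit Defensive.
Import Order.TTheory GRing.Theory Num.Theory.

Section Hall.
Variables (L R : finType) (r0 : R).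

Definition nbh (E : L -> {set R}) (S : {set L}) := \bigcup_(x in S) E x.

Lemma nbhP (E : L -> {set R}) (S : {set L}) (y : R) : reflect (exists2 x, x \in S & y \in E x) (y \in nbh E S).
Proof. exact: bigcupP. Qed.

Lemma hall n : forall (E : L -> {set R}) (A : {set L}), #|A| <= n ->
  (forall S : {set L}, S \subset A -> #|S| <= #|nbh E S|) ->
  exists f : L -> R, {in A, forall x, f x \in E x} /\ {in A &, injective f}.
Proof.
elim: n => [|n IH] E A hA hH.
  exists (fun _ => r0); split=> x; move: hA; rewrite leqn0 cards_eq0 => /eqP ->;
  by rewrite inE.
have [/existsP [S0 /and3P [pS0 nS0 cS0]] | noS] :=
  boolP [exists S : {set L}, [&& S \proper A, S != set0 & #|nbh E S| <= #|S|]].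
- have sS0A : S0 \subset A by case/andP: pS0.
  have [f1 [f1E f1i]] : exists f : L -> R, {in S0, forall x, f x \in E x} /\ {in S0 &, injective f}.
    apply: IH; first by have := proper_card pS0; lia.
    by move=> S sS; apply: hH; apply: subset_trans sS sS0A.
  pose E' x := E x :\: nbh E S0.
  have [f2 [f2E f2i]] : exists f : L -> R, {in A :\: S0, forall x, f x \in E' x} /\ {in A :\: S0 &, injective f}.
    apply: IH.
      have := cardsID S0 A; rewrite (setIidPr sS0A); rewrite -card_gt0 in nS0; lia.
    move=> T sT.
    have sTA : T :|: S0 \subset A by rewrite subUset sS0A andbT; apply: subset_trans sT (subsetDl _ _).
    have h1 := hH _ sTA.
    have dTS : T :&: S0 = set0.
      apply/setP=> x; rewrite !inE; apply/negP=> /andP [xT xS].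
      by move: (subsetP sT x xT); rewrite inE xS.
    have h2 : #|T :|: S0| = #|T| + #|S0| by rewrite cardsU dTS cards0 subn0.
    have h3 : nbh E (T :|: S0) \subset nbh E' T :|: nbh E S0.
      apply/subsetP=> y /nbhP [x]; rewrite inE => /orP [xT|xS] yE; rewrite inE.
        case: (boolP (y \in nbh E S0)) => yn; first by rewrite orbT.
        by rewrite orbF; apply/nbhP; exists x => //; rewrite inE yn.
      by apply/orP; right; apply/nbhP; exists x.
    have h4 := subset_leq_card h3.
    have h5 := leq_card_setU (nbh E' T) (nbh E S0).
    move: h5 => [h5 _]; lia.
  exists (fun x => if x \in S0 then f1 x else f2 x); split.
    move=> x xA; case: ifP => xS; first exact: f1E.
    by have := f2E x; rewrite !inE xS xA => /(_ isT); case/andP.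
  move=> x y xA yA; case: ifP => xS; case: ifP => yS.
  + exact: f1i.
  + move=> e; have := f2E y; rewrite !inE yS yA => /(_ isT) /andP [/negP []].
    by rewrite -e; apply/nbhP; exists x => //; apply: f1E.
  + move=> e; have := f2E x; rewrite !inE xS xA => /(_ isT) /andP [/negP []].
    by rewrite e; apply/nbhP; exists y => //; apply: f1E.
  + by apply: f2i; rewrite inE ?xS ?yS.
- have [A0 | [a aA]] := set_0Vmem A.
    exists (fun _ => r0); split=> x; by rewrite A0 inE.
  have : 0 < #|E a|.
    have := hH [set a]; rewrite sub1set aA cards1 => /(_ isT).
    by rewrite /nbh big_set1.
  case/card_gt0P => b bE.
  pose E' x := E x :\ b.
  have [f [fE fi]] : exists f : L -> R, {in A :\ a, forall x, f x \in E' x} /\ {in A :\ a &, injective f}.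
    apply: IH; first by have := cardsD1 a A; rewrite aA; lia.
    move=> T sT.
    have [T0|Tn] := eqVneq T set0; first by rewrite T0 cards0.
    have pT : T \proper A.
      apply: (sub_proper_trans sT); exact: properD1.
    have sTA : T \subset A by case/andP: pT.
    have h1 : #|T| < #|nbh E T|.
      rewrite ltnNge; apply/negP => h; move/negP: noS; apply; apply/existsP; exists T.
      by rewrite pT Tn h.
    have h3 : nbh E T :\ b \subset nbh E' T.
      apply/subsetP=> y; rewrite inE => /andP [yb /nbhP [x xT yE]].
      by apply/nbhP; exists x => //; rewrite inE yb.
    have h4 := subset_leq_card h3.
    have h5 := cardsD1 b (nbh E T).
    case: (b \in nbh E T) h5 => /=; lia.
  exists (fun x => if x == a then b else f x); split.
    move=> x xA; case: eqP => [->|xa] //.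
    have xA' : x \in A :\ a by rewrite !inE xA andbT; apply/eqP.
    by have := fE x xA'; rewrite inE => /andP [].
  move=> x y xA yA.
  case: eqP => [xa|/eqP xa]; case: eqP => [ya|/eqP ya].
  + by rewrite xa ya.
  + have yA' : y \in A :\ a by rewrite !inE yA ya.
    by move=> e; have := fE y yA'; rewrite !inE -e eqxx.
  + have xA' : x \in A :\ a by rewrite !inE xA xa.
    by move=> e; have := fE x xA'; rewrite !inE e eqxx.
  + have yA' : y \in A :\ a by rewrite !inE yA ya.
    have xA' : x \in A :\ a by rewrite !inE xA xa.
    exact: fi.
Qed.
End Hall.

Lemma L_bound k w w' : (w <= w')%N -> (w' <= k)%N ->
  ('C(w', w) <= ncopies k w w' * 'C(k - w, w' - w))%N.
Proof.
move=> h1 h2.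
set d := (w' - w)%N.
have eL : Lkww k w w' = ((w' ^_ d)%:R / ((k - w) ^_ d)%:R)%R.
  by rewrite /Lkww big_mkord prodf_div -!natr_prod -!ffact_prod.
have pos : (0 < (k - w) ^_ d)%N by rewrite ffact_gt0 /d; lia.
have L0 : (0 <= Lkww k w w')%R by rewrite eL divr_ge0 // ler0n.
have hc : (Lkww k w w' <= (ncopies k w w')%:R)%R.
  rewrite /ncopies natr_absz ger0_norm ?ceil_ge // ceil_ge0.
  by apply: lt_le_trans L0; rewrite ltrN10.
move: hc; rewrite eL ler_pdivrMr ?ltr0n // -natrM ler_nat -!bin_ffact mulnA.
rewrite leq_pmul2r ?fact_gt0 // /d bin_sub //.
Qed.

Lemma supp_inj k : injective (@supp k).
Proof.
move=> v1 v2 e; apply/ffunP=> i.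
by have := congr1 (fun S : {set 'I_k} => i \in S) e; rewrite !inE.
Qed.

Definition vec_of k (B : {set 'I_k}) : bvec k := [ffun i => i \in B].

Lemma supp_vec_of k (B : {set 'I_k}) : supp (vec_of B) = B.
Proof. by apply/setP=> i; rewrite !inE ffunE. Qed.

Lemma right_deg k w w' (v' : bvec k) : v' \in Vw k w' ->
  (#|[set v in Vw k w | supp v \subset supp v']| <= 'C(w', w))%N.
Proof.
rewrite inE => /eqP e.
rewrite -(card_imset _ (@supp_inj k)) -e -cards_draws.
apply: subset_leq_card; apply/subsetP=> B /imsetP [v]; rewrite !inE => /andP [hv hs] ->.
by rewrite hs hv.
Qed.

Lemma left_deg k w w' (v : bvec k) : (w <= w')%N -> v \in Vw k w ->
  ('C(k - w, w' - w) <= #|[set v' in Vw k w' | supp v \subset supp v']|)%N.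
Proof.
move=> ww; rewrite inE => /eqP ev.
have ec : #|~: supp v| = (k - w)%N by have := cardsC (supp v); rewrite card_ord; lia.
rewrite -ec -cards_draws.
pose g B := vec_of (supp v :|: B).
set D := [set A : {set 'I_k} | _].
rewrite -(@card_in_imset _ _ g D).
  apply: subset_leq_card; apply/subsetP=> y /imsetP [B]; rewrite !inE => /andP [hB cB] ->.
  rewrite /g supp_vec_of subsetUl andbT.
  have I0 : supp v :&: B = set0.
    apply/setP => i; rewrite !inE; case: (boolP (i \in B)) => hiB; last by rewrite andbF.
    by have := subsetP hB i hiB; rewrite !inE => /negbTE ->.
  by rewrite cardsU I0 cards0 ev (eqP cB); apply/eqP; lia.
move=> B1 B2; rewrite !inE => /andP [hB1 _] /andP [hB2 _] /(congr1 (@supp k)).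
rewrite /g !supp_vec_of => e.
apply/setP=> i; move: (subsetP hB1 i) (subsetP hB2 i) (congr1 (fun S : {set 'I_k} => i \in S) e).
rewrite !inE; case: (v i); case: (i \in B1); case: (i \in B2) => //=.
- by move=> /(_ isT).
Qed.

Lemma sum_bool_card (I : finType) (A B : pred I) :
  (\sum_(i in A) (i \in B : nat) = #|[predI A & B]|)%N.
Proof.
rewrite -sum1_card [RHS]big_mkcond [LHS]big_mkcond; apply: eq_bigr => i _.
by rewrite !inE; case: (i \in A); case: (B i).
Qed.

Theorem lemma10 (k w w' : nat) :
  (1 <= k)%N -> (w < w')%N -> (w' <= k)%N ->
  exists M : {set bvec k * right_vtx k w w'}, perfect_matching_wrt_left M.
Proof.
move=> hk hw hw'.
have ww : (w <= w')%N by apply: ltnW.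
set c := ncopies k w w'.
have Lb := L_bound ww hw'.
have Cpos : (0 < 'C(w', w))%N by rewrite bin_gt0.
have cpos : (0 < c)%N.
  rewrite lt0n; apply/eqP=> c0; move: Lb; rewrite -/c c0 mul0n; lia.
pose r0 : right_vtx k w w' := ([ffun=> false], Ordinal cpos).
pose E (v : bvec k) : {set right_vtx k w w'} := [set r | Gedge (v, r)].
have EX v : v \in Vw k w ->
    E v = setX [set v' in Vw k w' | supp v \subset supp v'] [set: 'I_c].
  by move=> hv; apply/setP=> [[v' l]]; rewrite !inE /Gedge /= hv andbT /= inE.
have hH : forall S : {set bvec k}, S \subset Vw k w -> (#|S| <= #|nbh E S|)%N.
  move=> S hS.
  set T := nbh E S.
  have lb : (#|S| * (c * 'C(k - w, w' - w)) <= \sum_(v in S) #|E v|)%N.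
    rewrite -sum_nat_const; apply: leq_sum => v vS.
    have vV := subsetP hS v vS.
    rewrite EX // cardsX cardsT card_ord mulnC; apply: leq_mul => //.
    exact: left_deg.
  have ub : (\sum_(v in S) #|E v| <= #|T| * 'C(w', w))%N.
    have e1 : forall u, u \in S -> #|E u| = (\sum_(r in T) (r \in E u))%N.
      move=> v vS; rewrite sum_bool_card; apply: eq_card => r; rewrite [in RHS]inE.
      case: (boolP (r \in E v)) => h; rewrite ?andbF ?andbT //.
      by apply/esym/nbhP; exists v.
    rewrite (eq_bigr _ e1) exchange_big /= -sum_nat_const; apply: leq_sum => r rT.
    rewrite sum_bool_card.
    have [v0 v0S rE] := bigcupP rT.
    have r1 : r.1 \in Vw k w' by move: rE; rewrite inE /Gedge => /and3P [].
    apply: leq_trans (right_deg w r1).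
    apply: subset_leq_card; apply/subsetP=> v; rewrite !inE => /andP [vS].
    move=> h; have {h} : r \in E v by exact: h.
    rewrite inE /Gedge /=; case/and3P => h1 _ h3; rewrite h3 andbT; by move: h1; rewrite inE.
  have := leq_trans lb ub.
  move=> h; rewrite -(leq_pmul2r Cpos); apply: leq_trans h.
  by rewrite leq_mul2l Lb orbT.
have [f [fE fi]] := hall r0 (leqnn _) hH.
exists [set (v, f v) | v in Vw k w]; split.
- move=> e /imsetP [v vV ->]; by have := fE v vV; rewrite inE.
- by apply: card_imset => v1 v2 [].
- move=> e1 e2 /imsetP [v1 v1V ->] /imsetP [v2 v2V ->] ne; split => /=.
    by apply: contraNneq ne => ->.
  apply: contraNneq ne => e; have := fi _ _ v1V v2V e => ->. by [].
Qed.
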